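(* Let $A\supset B$ be as in the context. (1) Any $M_{A,B}$-differential is $(A,B)$-equivalent to a quasi-elementary $M_{A,B}$-differential. (2) If $\partial$ is a quasi-elementary $M_{A,B}$-differential, then the set $H(\partial)$ of $\partial$-boundary homologically essential elements coincides with the set of all elements of $P$ that appear in some vector $\partial(x)$ with $x\in X$. (3) If $\partial,\partial_1$ are $(A,B)$-equivalent quasi-elementary $M_{A,B}$-differentials, then for any $x\in X$ and $p\in P$, $\partial(x)$ contains $p$ if and only if $\partial_1(x)$ contains $p$.
   Context: $\mathbb E$ is a field; $A=\{a_1\prec\dots\prec a_N\}$ a finite linearly ordered graded set, $\mathbb E(A)$ the graded vector space with basis $A$. An $M$-differential is a degree $-1$ map $\partial$ with $\partial^2=0$, $\partial(a_i)\in\mathrm{span}\{a_1,\dots,a_{i-1}\}$. For $B\subset A$ with $\partial\mathbb E(B)\subset\mathbb E(B)$, $\partial$ is an $M_{A,B}$-differential; $\partial_B=\partial|_{\mathbb E(B)}$, and $\partial_{A\setminus B}$ is the induced differential on $\mathbb E(A)/\mathbb E(B)$, identified with $\mathbb E(A\setminus B)$ (with induced order and grading); both are $M$-differentials. $(A,B)$-equivalence: $\partial_2=g\partial_1g^{-1}$ with $g$ a graded automorphism preserving every $\mathrm{span}\{a_1,\dots,a_i\}$ and $\mathbb E(B)$. An $M$-differential on an ordered basis is elementary if each basis element is sent to $0$ or to a single basis element, and no two basis elements go to the same basis element. For an $M_{A,B}$-differential $\partial$ with $\partial_B$, $\partial_{A\setminus B}$ elementary: $Q=\{b\in B:\partial_B(b)\neq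 0\}$, $R=\partial_B(Q)$, $P=B\setminus(Q\cup R)$; $Y=\{a\in A\setminus B:\partial_{A\setminus B}(a)\ne0\}$, $Z=\partial_{A\setminus B}(Y)$, $X=(A\setminus B)\setminus(Y\cup Z)$. These sets depend only on the $(A,B)$-equivalence class (by uniqueness of elementary forms), so they are well defined for all differentials in (3). A vector $v=\sum_{a}v_aa$ contains $a$ if $v_a\neq0$. The differential $\partial$ is quasi-elementary if: $\partial_B$ and $\partial_{A\setminus B}$ are elementary; for each $x\in X$, $\partial(x)$ contains at most one element of $P$; if $\partial(x)$ contains $p\in P$ the coefficient is $1$; and each element of $P$ appears in at most one $\partial(x)$, $x\in X$. $\partial$-boundary homologically essential: with $B=\{b_1\prec\dots\prec b_K\}$, $B^k=\{b_1,\dots,b_k\}$, $\iota_*:H_*(\mathbb E(B^k),\partial_B)\to H_*(\mathbb E(B),\partial_B)$ induced by inclusion, $\partial_*$ the connecting map $H_{*+1}(\mathbb E(A),\mathbb E(B),\partial)\to H_*(\mathbb E(B),\partial_B)$, $I_k=\iota_*H_*(\mathbb E(B^k),\partial_B)\cap\operatorname{im}\partial_*$, $I_0=0$; $b_k$ is $\partial$-boundary homologically essential if $I_k\ne I_{k-1}$. *)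

(* Defs.v *)
From HB Require Import structures.
From mathcomp Require Import all_boot all_order all_algebra.
Set Implicit Arguments. Unset Strict Implicit. Unset Printing Implicit Defensive.
Import Order.TTheory GRing.Theory Num.Theory.
Local Open Scope ring_scope.

(* A = {a_1 < ... < a_N} is modelled by the ordinals 'I_N with
   their natural order; the grading is deg : 'I_N -> int.
   A linear map of E(A) is a matrix D : 'M[E]_N acting on ROW vectors
   (v |-> v *m D), so that row j of D is the image of the basis vector a_j:
   D j i = coefficient of a_i in D(a_j).  Hence "D(a_j) contains a_i" is
   D j i != 0. *)

Section Defs.
Variables (E : fieldType) (N : nat) (deg : 'I_N -> int) (B : {set 'I_N}).

Definition isM (D : 'M[E]_N) : Prop :=
  [/\ D *m D = 0,
      forall j i : 'I_N, D j i != 0 -> (i < j)%N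
    & forall j i : 'I_N, D j i != 0 -> deg i + 1 = deg j].

Definition isMAB (D : 'M[E]_N) : Prop :=
  isM D /\ forall j i : 'I_N, j \in B -> D j i != 0 -> i \in B.

(* (A,B)-equivalence: D2 = g D1 g^{-1}, with g(v) = v *m G *)
Definition ABequiv (D1 D2 : 'M[E]_N) : Prop :=
  exists G : 'M[E]_N,
    [/\ G \in unitmx,
        forall j i : 'I_N, G j i != 0 -> (i <= j)%N,        (* flags preserved *)
        forall j i : 'I_N, G j i != 0 -> deg i = deg j,
        forall j i : 'I_N, j \in B -> G j i != 0 -> i \in B
      & D2 = invmx G *m D1 *m G].

(* The induced differential on the basis S (S = B: restriction; S = A\B:
   quotient) sends a_j (j in S) to sum_{i in S} D j i a_i. *)
Definition sends_to (D : 'M[E]_N) (S : {set 'I_N}) (j i : 'I_N) : bool :=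
  [forall k in S, D j k == (k == i)%:R].

Definition elem_on (D : 'M[E]_N) (S : {set 'I_N}) : Prop :=
  (forall j, j \in S ->
     (forall i, i \in S -> D j i = 0) \/ (exists2 i, i \in S & sends_to D S j i))
  /\ (forall j1 j2 i, j1 \in S -> j2 \in S -> i \in S ->
        sends_to D S j1 i -> sends_to D S j2 i -> j1 = j2).

Definition srcs (D : 'M[E]_N) (S : {set 'I_N}) : {set 'I_N} :=
  [set j in S | [exists i in S, D j i != 0]].
Definition tgts (D : 'M[E]_N) (S : {set 'I_N}) : {set 'I_N} :=
  [set i in S | [exists j in S, sends_to D S j i]].

Definition Pset (D : 'M[E]_N) : {set 'I_N} := B :\: (srcs D B :|: tgts D B).
Definition Xset (D : 'M[E]_N) : {set 'I_N} :=
  ~: B :\: (srcs D (~: B) :|: tgts D (~: B)).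

Definition quasi_elem (D : 'M[E]_N) : Prop :=
  [/\ elem_on D B, elem_on D (~: B),
      (forall x p1 p2, x \in Xset D -> p1 \in Pset D -> p2 \in Pset D ->
         D x p1 != 0 -> D x p2 != 0 -> p1 = p2),
      (forall x p, x \in Xset D -> p \in Pset D -> D x p != 0 -> D x p = 1)
    & (forall p x1 x2, p \in Pset D -> x1 \in Xset D -> x2 \in Xset D ->
         D x1 p != 0 -> D x2 p != 0 -> x1 = x2)].

(* Homology, via row spaces (mxalgebra).  E(S) is the row space of chiS S. *)
Definition chiS (S : {set 'I_N}) : 'M[E]_N :=
  diag_mx (\row_(i < N) (i \in S)%:R).

(* Preimage in Z(E(B)) of the image of iota_* : H(E(S)) -> H(E(B)) for S in B:
   cycles in E(S) plus boundaries dE(B). *)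
Definition iota_im (D : 'M[E]_N) (S : {set 'I_N}) : 'M[E]_N :=
  ((kermx D :&: chiS S) + chiS B *m D)%MS.
(* Preimage in Z(E(B)) of im of the connecting map: E(B) /\ dE(A). *)
Definition conn_im (D : 'M[E]_N) : 'M[E]_N := (D :&: chiS B)%MS.
(* Preimage of I_k (with S = B^k) *)
Definition Ispace (D : 'M[E]_N) (S : {set 'I_N}) : 'M[E]_N :=
  (iota_im D S :&: conn_im D)%MS.

(* b = b_k in B is boundary homologically essential iff I_k <> I_{k-1};
   B^k = {c in B | c <= b_k}, B^{k-1} = {c in B | c < b_k}. *)
Definition essential (D : 'M[E]_N) (b : 'I_N) : bool :=
  (b \in B) &&
  ~~ (Ispace D [set c in B | (c <= b)%N] == Ispace D [set c in B | (c < b)%N])%MS.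

Definition Hset (D : 'M[E]_N) : {set 'I_N} := [set b | essential D b].

End Defs.

(* Main.v *)
Require Import Defs.
From HB Require Import structures.
From mathcomp Require Import all_boot all_order all_algebra.
Set Implicit Arguments. Unset Strict Implicit. Unset Printing Implicit Defensive.
Import Order.TTheory GRing.Theory Num.Theory.
Local Open Scope ring_scope.
From mathcomp Require Import ring.
Section Work.
Variables (E : fieldType) (N : nat) (deg : 'I_N -> int) (B : {set 'I_N}).
Implicit Types (D G H : 'M[E]_N).
Implicit Types (i j l m : 'I_N) (a c : E).

Lemma mulmx_nz (m n p : nat) (A : 'M[E]_(m,n)) (C : 'M[E]_(n,p)) (i : 'I_m) (j : 'I_p) :
  (A *m C) i j != 0 -> exists k, A i k != 0 /\ C k j != 0.
Proof.
move=> Hs; case: (pickP (fun k => (A i k != 0) && (C k j != 0))) => [k /andP[]|H0].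
  by exists k.
move: Hs; rewrite mxE big1 ?eqxx // => k _; move: (H0 k) => /negbT.
by rewrite negb_and !negbK => /orP[]/eqP->; rewrite ?mul0r ?mulr0.
Qed.

Definition good G := [/\ forall j i, G j i != 0 -> (i <= j)%N,
   forall j i, G j i != 0 -> deg i = deg j &
   forall j i, j \in B -> G j i != 0 -> i \in B].

Lemma good1 : good 1%:M.
Proof.
split=> [j i|j i|j i jB]; rewrite mxE; case: (eqVneq j i) => [<-|ne];
  rewrite ?eqxx ?leqnn ?(negbTE ne) ?eqxx //.
Qed.

Lemma good_mul G1 G2 : good G1 -> good G2 -> good (G1 *m G2).
Proof.
case=> a1 b1 c1 [a2 b2 c2]; split=> j i.
- by case/mulmx_nz=> k [/a1 h1 /a2 h2]; apply: leq_trans h2 h1.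
- by case/mulmx_nz=> k [/b1 h1 /b2 h2]; rewrite h2.
- by move=> jB; case/mulmx_nz=> k [/(c1 _ _ jB) h1 /(c2 _ _ h1)].
Qed.


Lemma invmx_of' n (A C : 'M[E]_n) : A *m C = 1%:M -> invmx A = C.
Proof.
move=> AC; have [uA uC] := mulmx1_unit AC.
by rewrite -[invmx A]mulmx1 -AC mulmxA mulVmx // mul1mx.
Qed.

Lemma ABequiv_refl D : ABequiv deg B D D.
Proof.
exists 1%:M; have [a b c] := good1; split=> //; first exact: unitmx1.
by rewrite invmx1 mul1mx mulmx1.
Qed.

Lemma ABequiv_trans D1 D2 D3 : ABequiv deg B D1 D2 -> ABequiv deg B D2 D3 ->
  ABequiv deg B D1 D3.
Proof.
case=> G1 [u1 a1 b1 c1 ->] [G2 [u2 a2 b2 c2 ->]].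
have [a b c] : good (G1 *m G2) by apply: good_mul.
exists (G1 *m G2); split=> //; first by rewrite unitmx_mul u1 u2.
have -> : invmx (G1 *m G2) = invmx G2 *m invmx G1.
  apply: invmx_of'; rewrite mulmxA -(mulmxA G1) mulmxV // mulmx1 mulmxV //.
by rewrite !mulmxA.
Qed.

Lemma ABequiv_HG D H G : good G -> H *m G = 1%:M -> ABequiv deg B D (H *m D *m G).
Proof.
move=> [a b c] HG; have [uH uG] := mulmx1_unit HG.
exists G; split=> //.
have -> // : invmx G = H.
by rewrite -[invmx G]mul1mx -HG -mulmxA mulmxV // mulmx1.
Qed.

Lemma isMAB_HG D H G : isMAB deg B D -> good H -> good G -> G *m H = 1%:M ->
  isMAB deg B (H *m D *m G).
Proof.
move=> [[D2 tD dD] bD] [aH bH cH] [aG bG cG] GH.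
split; first split.
- by rewrite !mulmxA -(mulmxA (H *m D) G H) GH mulmx1 -(mulmxA H D D) D2 mulmx0 !mul0mx.
- move=> j i /mulmx_nz [l [/mulmx_nz [k [/aH h1 /tD h2]] /aG h3]].
  by apply: leq_ltn_trans h3 (leq_trans h2 h1).
- move=> j i /mulmx_nz [l [/mulmx_nz [k [/bH h1 /dD h2]] /bG h3]].
  by rewrite h3 h2 h1.
- move=> j i jB /mulmx_nz [l [/mulmx_nz [k [/(cH _ _ jB) h1 /(bD _ _ h1) h2]] /(cG _ _ h2)]] //.
Qed.


Lemma sum_delta (j : 'I_N) (f : 'I_N -> E) : \sum_t (t == j)%:R * f t = f j.
Proof.
rewrite (bigD1 j) //= eqxx mul1r big1 ?addr0 // => t /negbTE ->; exact: mul0r.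
Qed.

Definition Hop (m : 'I_N) (a c : E) (l : 'I_N) : 'M[E]_N :=
  \matrix_(j, k) if j == m then a * (k == m)%:R + c * (k == l)%:R else (j == k)%:R.

Lemma HopMl m a c l (M : 'M[E]_N) j i :
  (Hop m a c l *m M) j i = if j == m then a * M m i + c * M l i else M j i.
Proof.
rewrite mxE; under eq_bigr do rewrite mxE.
case: eqP => _.
  under eq_bigr do rewrite mulrDl -!mulrA.
  by rewrite big_split /= -!mulr_sumr !sum_delta.
by under eq_bigr do rewrite eq_sym; rewrite sum_delta.
Qed.

Lemma HopMr m a c l (M : 'M[E]_N) j i :
  (M *m Hop m a c l) j i =
  M j i + M j m * (a * (i == m)%:R + c * (i == l)%:R - (m == i)%:R).
Proof.
rewrite mxE; under eq_bigr => k _ do rewrite mxE.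
have -> : \sum_k M j k * (if k == m then a * (i == m)%:R + c * (i == l)%:R
                          else (k == i)%:R) =
   \sum_k (M j k * (k == i)%:R + (k == m)%:R * (M j m *
       (a * (i == m)%:R + c * (i == l)%:R - (m == i)%:R))).
  apply: eq_bigr => k _; case: eqP => [->|/eqP ne]; last by rewrite mul0r addr0.
  rewrite (eq_sym i m) [true%:R]/= mul1r.
  by set x := (m == i)%:R; set y := (i == l)%:R; ring.
rewrite big_split /= sum_delta; congr (_ + _).
by under eq_bigr do rewrite mulrC; rewrite sum_delta.
Qed.


Lemma HopK (m : 'I_N) (a c a' c' : E) (l : 'I_N) : a * a' = 1 -> a * c' + c = 0 ->
  (l = m -> c = 0 /\ c' = 0) -> Hop m a c l *m Hop m a' c' l = 1%:M.
Proof.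
move=> h1 h2 h3; apply/matrixP => j i; rewrite HopMl !mxE.
case: (eqVneq j m) => [->|ne] //.
case: (eqVneq l m) => [e|ne].
  have [-> ->] := h3 e.
  by rewrite eqxx !mul0r !addr0 mulrA h1 mul1r eq_sym.
rewrite eqxx (eq_sym l i) (eq_sym m i).
have -> : a * (a' * (i == m)%:R + c' * (i == l)%:R) + c * (i == l)%:R =
  (a * a') * (i == m)%:R + (a * c' + c) * (i == l)%:R.
  by set x := (i == m)%:R; set y := (i == l)%:R; ring.
by rewrite h1 h2 mul0r addr0 mul1r.
Qed.

Definition opD D (m : 'I_N) (a c : E) (l : 'I_N) := Hop m a c l *m D *m Hop m a^-1 (- c / a) l.
Definition opOK (m : 'I_N) (a c : E) (l : 'I_N) := a != 0 /\
  (c != 0 -> [/\ (l < m)%N, deg l = deg m & (m \in B -> l \in B)]).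

Lemma good_Hop (m : 'I_N) (a c : E) (l : 'I_N) : (c != 0 -> [/\ (l < m)%N, deg l = deg m & (m \in B -> l \in B)]) ->
  good (Hop m a c l).
Proof.
move=> hc; split=> j k; rewrite mxE.
- case: (eqVneq j m) => [->|ne]; last by case: (eqVneq j k) => [->|] //=; rewrite eqxx.
  case: (eqVneq k m) => [->//|nk]; case: (eqVneq k l) => [e|nl]; last by rewrite !mulr0 addr0 eqxx.
  rewrite mulr0 add0r mulr1 => /hc [lm _ _]; rewrite e; exact: ltnW.
- case: (eqVneq j m) => [->|ne]; last by case: (eqVneq j k) => [->|] //=; rewrite eqxx.
  case: (eqVneq k m) => [->//|nk]; case: (eqVneq k l) => [e|nl]; last by rewrite !mulr0 addr0 eqxx.
  by rewrite mulr0 add0r mulr1 => /hc [_ dl _]; rewrite e.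
- move=> jB; case: (eqVneq j m) => [e|ne]; last by case: (eqVneq j k) => [<-|] //=; rewrite eqxx.
  case: (eqVneq k m) => [->|nk]; first by rewrite -e.
  case: (eqVneq k l) => [e2|nl]; last by rewrite !mulr0 addr0 eqxx.
  by rewrite mulr0 add0r mulr1 => /hc [_ _ /(_ _)]; rewrite e2 -e; apply.
Qed.

Lemma opOK_inv m a c l : opOK m a c l ->
  (- c / a != 0 -> [/\ (l < m)%N, deg l = deg m & (m \in B -> l \in B)]).
Proof.
case=> a0 hc h; apply: hc; apply: contraNneq h => ->; by rewrite oppr0 mul0r.
Qed.

Lemma op_inv1 m a c l : opOK m a c l ->
  Hop m a c l *m Hop m a^-1 (- c / a) l = 1%:M.
Proof.
case=> a0 hc; apply: HopK; first by rewrite mulfV.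
  by rewrite mulrCA mulfV // mulr1 addNr.
move=> e; have c0 : c = 0.
  by apply/eqP; apply: contraT => /hc [lm _ _]; move: lm; rewrite e ltnn.
by rewrite c0 oppr0 mul0r.
Qed.

Lemma op_inv2 m a c l : opOK m a c l ->
  Hop m a^-1 (- c / a) l *m Hop m a c l = 1%:M.
Proof. by move=> h; apply: mulmx1C; apply: op_inv1. Qed.

Lemma op_equiv D m a c l : opOK m a c l -> ABequiv deg B D (opD D m a c l).
Proof.
move=> h; apply: ABequiv_HG; last exact: op_inv1.
exact: good_Hop (opOK_inv h).
Qed.

Lemma op_isMAB D m a c l : opOK m a c l -> isMAB deg B D -> isMAB deg B (opD D m a c l).
Proof.
move=> h hD; apply: isMAB_HG => //; last exact: op_inv2.
- by apply: good_Hop; case: h.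
- exact: good_Hop (opOK_inv h).
Qed.

Lemma opE D m a c l j i : opOK m a c l ->
  opD D m a c l j i =
  (if j == m then a * D m i + c * D l i else D j i) +
  (if j == m then a * D m m + c * D l m else D j m) *
     (a^-1 * (i == m)%:R + (- c / a) * (i == l)%:R - (m == i)%:R).
Proof. by move=> h; rewrite /opD HopMr !HopMl. Qed.

Lemma tri0 D j i : isMAB deg B D -> (j <= i)%N -> D j i = 0.
Proof.
move=> [[_ t _] _] ji; apply/eqP; apply: contraT => /t; by rewrite ltnNge ji.
Qed.

Lemma triD D j i : isMAB deg B D -> D j i != 0 -> (i < j)%N.
Proof. by move=> [[_ t _] _] /t. Qed.

Lemma degD D j i : isMAB deg B D -> D j i != 0 -> deg i + 1 = deg j.
Proof. by move=> [[_ _ d] _] /d. Qed.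

Lemma opE_m D m a c l i : isMAB deg B D -> opOK m a c l ->
  opD D m a c l m i = a * D m i + c * D l i.
Proof.
move=> hD h; rewrite opE // eqxx.
have -> : a * D m m + c * D l m = 0.
  rewrite (tri0 hD (leqnn m)) mulr0 add0r.
  case: h => _ hc; case: (eqVneq c 0) => [->|/hc [lm _ _]]; first by rewrite mul0r.
  by rewrite (tri0 hD (ltnW lm)) mulr0.
by rewrite mul0r addr0.
Qed.

Lemma opE_ne D m a c l j i : opOK m a c l -> j != m ->
  opD D m a c l j i = D j i + D j m *
     (a^-1 * (i == m)%:R + (- c / a) * (i == l)%:R - (m == i)%:R).
Proof. by move=> h jm; rewrite opE // (negbTE jm). Qed.

Lemma opE_0 D m a c l j i : opOK m a c l -> j != m -> D j m = 0 ->
  opD D m a c l j i = D j i.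
Proof. by move=> h jm e; rewrite opE_ne // e mul0r addr0. Qed.

Lemma opE_oth D m a c l j i : opOK m a c l -> j != m -> i != m -> i != l ->
  opD D m a c l j i = D j i.
Proof.
move=> h jm im il; rewrite opE_ne // (negbTE im) (negbTE il) eq_sym (negbTE im).
by rewrite !mulr0 subr0 addr0 mulr0 addr0.
Qed.

Lemma opE_l D m a c l j : opOK m a c l -> j != m -> l != m ->
  opD D m a c l j l = D j l - D j m * (c / a).
Proof.
move=> h jm lm; rewrite opE_ne // (negbTE lm) eqxx eq_sym (negbTE lm).
by rewrite mulr0 add0r subr0 mulr1 mulNr mulrN.
Qed.

Lemma opE_mm D m a c l j : opOK m a c l -> j != m -> l != m ->
  opD D m a c l j m = D j m / a.
Proof.
move=> h jm lm; rewrite opE_ne // eqxx (eq_sym m l) (negbTE lm) mulr0 addr0 mulr1.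
by rewrite mulrBr mulr1 addrC subrK.
Qed.

Lemma opE_sc D m a j : a != 0 -> j != m ->
  opD D m a 0 m j m = D j m / a.
Proof.
move=> a0 jm; have h : opOK m a 0 m by split=> //; rewrite eqxx.
rewrite opE_ne // eqxx oppr0 mul0r mul0r addr0 mulr1.
by rewrite mulrBr mulr1 addrC subrK.
Qed.
Lemma sends_toP D (S : {set 'I_N}) j i i' : sends_to D S j i -> i' \in S -> D j i' = (i' == i)%:R.
Proof. by move=> /forallP h iS; move: (h i'); rewrite iS /= => /eqP. Qed.

Lemma sends_to1 D (S : {set 'I_N}) j i : sends_to D S j i -> i \in S -> D j i = 1.
Proof. by move=> h iS; rewrite (sends_toP h iS) eqxx. Qed.

Lemma sends_toI D (S : {set 'I_N}) j i : (forall i', i' \in S -> D j i' = (i' == i)%:R) -> sends_to D S j i.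
Proof. by move=> h; apply/forallP => i'; apply/implyP => iS; rewrite h. Qed.

Lemma sends_to_ext D D' (S : {set 'I_N}) j i : (forall i', i' \in S -> D' j i' = D j i') ->
  sends_to D S j i -> sends_to D' S j i.
Proof. by move=> e h; apply: sends_toI => i' iS; rewrite e // (sends_toP h). Qed.

Definition wt (x : E) : nat := (x != 0) + ((x != 0) && (x != 1)).

Lemma sum_lt (S : {set 'I_N}) (f g : 'I_N -> nat) i0 :
  (forall i, i \in S -> f i <= g i)%N -> i0 \in S -> (f i0 < g i0)%N ->
  (\sum_(i in S) f i < \sum_(i in S) g i)%N.
Proof.
move=> le i0S lt; rewrite (bigD1 i0) //= (bigD1 i0 i0S) /=.
rewrite -addSn; apply: leq_add => //.
by apply: leq_sum => i /andP [iS _]; apply: le.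
Qed.

Section Stage.
Variables (S : {set 'I_N}) (D0 : 'M[E]_N).
Hypothesis hS : forall D, isMAB deg B D -> forall j i k, j \in S -> i \in S -> k \notin S ->
  D j k * D k i = 0.
Hypothesis hSB : forall m l, m \in S -> l \in S -> m \in B -> l \in B.

Definition EB (k : nat) D :=
  (forall j, j \in S -> (j < k)%N ->
     (forall i, i \in S -> D j i = 0) \/ (exists2 i, i \in S & sends_to D S j i)) /\
  (forall j1 j2 i, j1 \in S -> j2 \in S -> i \in S -> (j1 < k)%N -> (j2 < k)%N ->
     sends_to D S j1 i -> sends_to D S j2 i -> j1 = j2).

Definition Inv (k : nat) D := [/\ isMAB deg B D, ABequiv deg B D0 D,
  (forall j i, j \notin S -> i \notin S -> D j i = D0 j i) & EB k D].

Lemma EB_ext k D D' : (forall j i, j \in S -> (j < k)%N -> i \in S -> D' j i = D j i) ->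
  EB k D -> EB k D'.
Proof.
move=> e [h1 h2]; split.
  move=> j jS jk; case: (h1 j jS jk) => [z|[i iS si]].
    by left=> i iS; rewrite e // z.
  by right; exists i => //; apply: sends_to_ext si => i' i'S; rewrite e.
move=> j1 j2 i j1S j2S iS j1k j2k s1 s2; apply: (h2 j1 j2 i) => //.
  by apply: sends_to_ext s1 => i' i'S; rewrite e.
by apply: sends_to_ext s2 => i' i'S; rewrite e.
Qed.

Definition isTgt k D i := [exists j, [&& j \in S, (j < k)%N & sends_to D S j i]].

Lemma noSource D (kk : 'I_N) i : Inv kk D -> kk \in S -> i \in S -> D kk i != 0 ->
  forall i', i' \in S -> D i i' = 0.
Proof.
move=> [hD _ _ [h1 h2]] kS iS nz.
have ik : (i < kk)%N := triD hD nz.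
case: (h1 i iS ik) => [//|[t tS st]].
have DD : (D *m D) kk t = 0 by case: hD => [[-> _ _] _]; rewrite mxE.
exfalso; move: DD; rewrite mxE.
have -> : \sum_j D kk j * D j t = \sum_j (j == i)%:R * D kk i.
  apply: eq_bigr => j _; case: (eqVneq j i) => [->|ne].
    by rewrite (sends_to1 st tS) mulr1 mul1r.
  rewrite mul0r; case: (boolP (j \in S)) => jS; last exact: hS.
  case: (eqVneq (D kk j) 0) => [->|nz2]; first by rewrite mul0r.
  have jk : (j < kk)%N := triD hD nz2.
  case: (h1 j jS jk) => [z|[t' t'S st']]; first by rewrite z // mulr0.
  rewrite (sends_toP st' tS); case: (eqVneq t t') => [e|]; last by rewrite mulr0.
  by move: ne; rewrite (h2 j i t jS iS tS jk ik) ?eqxx // e.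
by rewrite sum_delta; apply/eqP.
Qed.

Lemma EB_succ D (kk : 'I_N) : EB kk D ->
  ((forall i, i \in S -> D kk i = 0) \/
   exists2 m, m \in S & sends_to D S kk m /\ ~~ isTgt kk D m) -> EB kk.+1 D.
Proof.
move=> [h1 h2] hk.
have cs : forall j : 'I_N, (j < kk.+1)%N -> j = kk \/ (j < kk)%N.
  by move=> j; rewrite ltnS leq_eqVlt => /orP [/eqP/ord_inj|]; [left|right].
have key : forall j i, j \in S -> i \in S -> (j < kk)%N -> sends_to D S kk i ->
    sends_to D S j i -> False.
  move=> j i jS iS jk s1 s2; case: hk => [z|[m mS [sm nT]]].
    by move: (sends_to1 s1 iS); rewrite z // => /eqP; rewrite eq_sym oner_eq0.
  have im : i = m by move: (sends_to1 s1 iS); rewrite (sends_toP sm iS); case: eqP => // _ /eqP; rewrite eq_sym oner_eq0.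
  move: nT; rewrite im in s2 *; case/negP; apply/existsP; exists j; rewrite jS jk s2 //.
split.
  move=> j jS /cs [->|jk]; last exact: h1.
  case: hk => [z|[m mS [sm _]]]; [by left | by right; exists m].
move=> j1 j2 i j1S j2S iS /cs [e1|l1] /cs [e2|l2] s1 s2.
- by rewrite e1 e2.
- by exfalso; rewrite e1 in s1; apply: (key j2 i).
- by exfalso; rewrite e2 in s2; apply: (key j1 i).
- exact: (h2 j1 j2 i).
Qed.

Lemma Inv_notS D (kk : 'I_N) : kk \notin S -> Inv kk D -> Inv kk.+1 D.
Proof.
move=> kS [a b c [h1 h2]]; split=> //.
have cs : forall j : 'I_N, j \in S -> (j < kk.+1)%N -> (j < kk)%N.
  move=> j jS; rewrite ltnS leq_eqVlt => /orP [/eqP/ord_inj e|//].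
  by move: kS; rewrite -e jS.
split; first by move=> j jS /(cs _ jS); apply: h1.
move=> j1 j2 i j1S j2S iS /(cs _ j1S) l1 /(cs _ j2S) l2; exact: h2.
Qed.

Definition mu (kk : 'I_N) D := (\sum_(i in S) wt (D kk i))%N.

Lemma wt0 : wt 0 = 0%N. Proof. by rewrite /wt eqxx. Qed.
Lemma wt1 : wt 1 = 1%N. Proof. by rewrite /wt oner_eq0 eqxx. Qed.
Lemma wt_pos x : x != 0 -> (0 < wt x)%N. Proof. by rewrite /wt => ->. Qed.
Lemma wt_2 x : x != 0 -> x != 1 -> wt x = 2. Proof. by rewrite /wt => -> ->. Qed.

Lemma Inv_op D (kk : 'I_N) m a c l : Inv kk D -> opOK m a c l -> m \in S ->
  (c != 0 -> l \in S) ->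
  (forall j i, j \in S -> (j < kk)%N -> i \in S -> opD D m a c l j i = D j i) ->
  Inv kk (opD D m a c l).
Proof.
move=> [hD eq oth eb] ok mS lS rows; split.
- exact: op_isMAB.
- exact: ABequiv_trans eq (op_equiv _ ok).
- move=> j i jS iS; rewrite -oth //.
  have jm : j != m by apply: contraNneq jS => ->.
  have im : i != m by apply: contraNneq iS => ->.
  case: (eqVneq c 0) => [c0|/lS lS'].
    rewrite opE_ne // c0 oppr0 mul0r mul0r addr0 (negbTE im) eq_sym (negbTE im).
    by rewrite mulr0 subr0 mulr0 addr0.
  by rewrite opE_oth //; apply: contraNneq iS => ->.
- exact: EB_ext eb.
Qed.
Lemma rowS0 D (kk : 'I_N) m : Inv kk D -> m \in S -> ~~ isTgt kk D m ->
  forall j, j \in S -> (j < kk)%N -> D j m = 0.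
Proof.
move=> [_ _ _ [h1 _]] mS nT j jS jk.
case: (h1 j jS jk) => [z|[t tS st]]; first exact: z.
rewrite (sends_toP st mS); case: eqP => // e.
by move: nT; rewrite e; case/negP; apply/existsP; exists j; rewrite jS jk st.
Qed.

Lemma step_body D (kk : 'I_N) : kk \in S -> Inv kk D ->
  (exists D', Inv kk.+1 D') \/ (exists D', Inv kk D' /\ (mu kk D' < mu kk D)%N).
Proof.
move=> kS iv; have [hD _ _ [h1 h2]] := iv.
case: (pickP (fun i => [&& i \in S, D kk i != 0 & isTgt kk D i])) => [i /and3P [iS nz /existsP [j /and3P [jS jk sj]]]|noT].
  right; set c := - D kk i.
  have ok : opOK kk 1 c j.
    split; first exact: oner_neq0.
    move=> _; split=> //; last exact: hSB.
    have sjnz : D j i != 0 by rewrite (sends_to1 sj iS) oner_neq0.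
    by rewrite -(degD hD sjnz) (degD hD nz).
  exists (opD D kk 1 c j); split.
    apply: Inv_op => //. move=> j' i' j'S j'k i'S; apply: opE_0 => //.
      by apply: contraTneq j'k => ->; rewrite ltnn.
    exact: tri0 hD (ltnW j'k).
  apply: (sum_lt (i0 := i)) => //.
    move=> i' i'S; rewrite opE_m // mul1r (sends_toP sj i'S) /c.
    case: eqP => [->|_]; last by rewrite mulr0 addr0.
    by rewrite mulr1 addrN wt0.
  by rewrite opE_m // mul1r (sends_to1 sj iS) /c mulr1 addrN wt0; apply: wt_pos.
have noT' : forall i, i \in S -> D kk i != 0 -> ~~ isTgt kk D i.
  by move=> i iS nz; move: (noT i); rewrite /= iS nz /= => ->.
case: (pickP (fun p : 'I_N * 'I_N => [&& p.1 \in S, p.2 \in S, D kk p.1 != 0,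
     D kk p.2 != 0 & (p.2 < p.1)%N])) => [[m l] /and5P [/= mS lS nzm nzl lm]|noTwo].
  right; set c := D kk l / D kk m.
  have mk : (m < kk)%N := triD hD nzm.
  have ok : opOK m 1 c l.
    split; first exact: oner_neq0.
    move=> _; split=> //; last exact: hSB.
    by apply: (@addIr _ 1); rewrite (degD hD nzm) (degD hD nzl).
  have km : kk != m by apply: contraTneq mk => ->; rewrite ltnn.
  have lm' : l != m by apply: contraTneq lm => ->; rewrite ltnn.
  exists (opD D m 1 c l); split.
    apply: Inv_op => // j' i' j'S j'k i'S.
    case: (eqVneq j' m) => [->|j'm].
      rewrite opE_m // (noSource iv kS mS nzm i'S) (noSource iv kS lS nzl i'S).
      by rewrite !mulr0 addr0.
    by apply: opE_0 => //; apply: rowS0 iv mS (noT' _ mS nzm) _ j'S j'k.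
  apply: (sum_lt (i0 := l)) => //.
    move=> i' i'S; case: (eqVneq i' l) => [->|i'l].
      by rewrite opE_l // divr1 /c mulrCA mulfV // mulr1 subrr wt0.
    case: (eqVneq i' m) => [->|i'm]; first by rewrite opE_mm // divr1.
    by rewrite opE_oth.
  by rewrite opE_l // divr1 /c mulrCA mulfV // mulr1 subrr wt0; apply: wt_pos.
case: (pickP (fun i => (i \in S) && (D kk i != 0))) => [m /andP [mS nzm]|noSupp].
  have only : forall i, i \in S -> i != m -> D kk i = 0.
    move=> i iS im; apply/eqP; apply: contraNT im => nzi.
    case: (ltngtP i m) => [il|il|/val_inj -> //].
      by move: (noTwo (m, i)); rewrite /= mS iS nzm nzi il.
    by move: (noTwo (i, m)); rewrite /= mS iS nzm nzi il.
  case: (eqVneq (D kk m) 1) => [e1|n1].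
    left; exists D; case: iv => a b c d; split=> //.
    apply: EB_succ => //; right; exists m => //; split; last exact: noT'.
    apply: sends_toI => i' i'S; case: (eqVneq i' m) => [->|i'm]; first by rewrite e1.
    by rewrite only.
  right; set a := D kk m.
  have ok : opOK m a 0 m by split=> //; rewrite eqxx.
  have km : kk != m by apply: contraTneq (triD hD nzm) => ->; rewrite ltnn.
  exists (opD D m a 0 m); split.
    apply: Inv_op => //.
    move=> j' i' j'S j'k i'S; case: (eqVneq j' m) => [->|j'm].
      by rewrite opE_m // (noSource iv kS mS nzm i'S) !mulr0 addr0.
    by apply: opE_0 => //; apply: rowS0 iv mS (noT' _ mS nzm) _ j'S j'k.
  apply: (sum_lt (i0 := m)) => //.
    move=> i' i'S; case: (eqVneq i' m) => [->|i'm].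
      by rewrite opE_sc // /a mulfV // wt1; apply: wt_pos.
    by rewrite opE_oth.
  by rewrite opE_sc // /a mulfV // wt1 wt_2.
left; exists D; case: iv => a b c d; split=> //.
apply: EB_succ => //; left => i iS; apply/eqP; move: (noSupp i); rewrite iS /=.
by move/negbT; rewrite negbK.
Qed.

Lemma stage_mu n D (kk : 'I_N) : kk \in S -> (mu kk D <= n)%N -> Inv kk D ->
  exists D', Inv kk.+1 D'.
Proof.
elim: n D => [|n IH] D kS hm iv; case: (step_body kS iv) => // [[D' [iv' lt]]].
  by move: (leq_trans lt hm).
by apply: (IH D') => //; rewrite -ltnS; apply: leq_trans lt hm.
Qed.

Lemma stage_k k : (k <= N)%N -> isMAB deg B D0 -> exists D, Inv k D.
Proof.
move=> + hD0; elim: k => [|k IH] kN.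
  exists D0; split=> //; first exact: ABequiv_refl.
have [D iv] := IH (ltnW kN).
pose kk := Ordinal kN.
case: (boolP (kk \in S)) => kS.
  exact: (@stage_mu (mu kk D) D kk kS (leqnn _) iv).
by exists D; apply: (Inv_notS kS iv).
Qed.

Lemma stage_final : isMAB deg B D0 -> exists D, [/\ isMAB deg B D, ABequiv deg B D0 D,
  (forall j i, j \notin S -> i \notin S -> D j i = D0 j i) & elem_on D S].
Proof.
move=> hD0; have [D [a b c [h1 h2]]] := stage_k (leqnn N) hD0.
exists D; split=> //; split.
  by move=> j jS; apply: h1 => //; apply: ltn_ord.
by move=> j1 j2 i j1S j2S iS; apply: h2 => //; apply: ltn_ord.
Qed.
End Stage.
Lemma hS_B D : isMAB deg B D -> forall j i k, j \in B -> i \in B -> k \notin B ->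
  D j k * D k i = 0.
Proof.
move=> [_ bD] j i k jB iB kB; case: (eqVneq (D j k) 0) => [->|/(bD _ _ jB) kB']; first by rewrite mul0r.
by rewrite kB' in kB.
Qed.

Lemma hS_nB D : isMAB deg B D -> forall j i k, j \in ~:B -> i \in ~:B -> k \notin ~:B ->
  D j k * D k i = 0.
Proof.
move=> [_ bD] j i k; rewrite !in_setC negbK => jB iB kB.
case: (eqVneq (D k i) 0) => [->|/(bD _ _ kB) iB']; first by rewrite mulr0.
by rewrite iB' in iB.
Qed.

Lemma block_eq D D' (S : {set 'I_N}) : (forall j i, j \in S -> i \in S -> D' j i = D j i) ->
  [/\ srcs D' S = srcs D S, tgts D' S = tgts D S & (elem_on D S -> elem_on D' S)].
Proof.
move=> e.
have es : forall j i, j \in S -> sends_to D' S j i = sends_to D S j i.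
  move=> j i jS; apply/forallP/forallP => h k; move: (h k);
    by case: (boolP (k \in S)) => //= kS; rewrite e.
split.
- apply/setP => j; rewrite !inE; case: (boolP (j \in S)) => //= jS.
  by apply: eq_existsb => i; case: (boolP (i \in S)) => //= iS; rewrite e.
- apply/setP => i; rewrite !inE; case: (boolP (i \in S)) => //= iS.
  by apply: eq_existsb => j; case: (boolP (j \in S)) => //= jS; rewrite es.
- move=> [h1 h2]; split.
    move=> j jS; case: (h1 j jS) => [z|[i iS si]].
      by left => i iS; rewrite e // z.
    by right; exists i => //; rewrite es.
  by move=> j1 j2 i j1S j2S iS; rewrite !es //; apply: h2.
Qed.

Lemma PsetE D p : (p \in Pset B D) =
  [&& p \in B, ~~ [exists i in B, D p i != 0] & ~~ [exists j in B, sends_to D B j p]].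
Proof. by rewrite /Pset /srcs /tgts !inE; case: (p \in B); rewrite /= ?negb_or ?andbT. Qed.

Lemma XsetE D x : (x \in Xset B D) =
  [&& x \notin B, ~~ [exists i in ~:B, D x i != 0] & ~~ [exists j in ~:B, sends_to D (~:B) j x]].
Proof. by rewrite /Xset /srcs /tgts !inE; case: (x \in B); rewrite /= ?negb_or ?andbT. Qed.

Lemma P_row0 D p i : isMAB deg B D -> p \in Pset B D -> D p i = 0.
Proof.
move=> [_ bD]; rewrite PsetE => /and3P [pB ns _].
apply/eqP; apply: contraNT ns => nz; apply/existsP; exists i; rewrite nz andbT.
exact: bD nz.
Qed.

Lemma P_col0 D j p : elem_on D B -> j \in B -> p \in Pset B D -> D j p = 0.
Proof.
move=> [h1 _] jB; rewrite PsetE => /and3P [pB _ nt].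
case: (h1 j jB) => [z|[t tB st]]; first exact: z.
rewrite (sends_toP st pB); case: eqP => // e.
by move: nt; rewrite e; case/negP; apply/existsP; exists j; rewrite jB st.
Qed.

Lemma X_col0 D j x : isMAB deg B D -> elem_on D (~:B) -> x \in Xset B D -> D j x = 0.
Proof.
move=> [_ bD] [h1 _]; rewrite XsetE => /and3P [xB _ nt].
case: (boolP (j \in B)) => jB.
  by apply/eqP; apply: contraNT xB => nz; exact: bD nz.
have jB' : j \in ~:B by rewrite in_setC.
have xB' : x \in ~:B by rewrite in_setC.
case: (h1 j jB') => [z|[t tB st]]; first exact: z.
rewrite (sends_toP st xB'); case: eqP => // e.
by move: nt; rewrite e; case/negP; apply/existsP; exists j; rewrite jB' st.
Qed.

Lemma X_row0 D x i : x \in Xset B D -> i \notin B -> D x i = 0.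
Proof.
rewrite XsetE => /and3P [_ ns _] iB; apply/eqP; apply: contraNT ns => nz.
by apply/existsP; exists i; rewrite in_setC iB nz.
Qed.

Lemma P_inB D p : p \in Pset B D -> p \in B.
Proof. by rewrite PsetE => /and3P []. Qed.

Lemma X_notB D x : x \in Xset B D -> x \notin B.
Proof. by rewrite XsetE => /and3P []. Qed.
Section Stage3.
Variables (D1 : 'M[E]_N).
Hypotheses (hD1 : isMAB deg B D1) (e1 : elem_on D1 B) (e2 : elem_on D1 (~:B)).
Local Notation P := (Pset B D1).
Local Notation X := (Xset B D1).

Definition Inv3 (k : nat) D := [/\ isMAB deg B D, ABequiv deg B D1 D,
  (forall j i, (j \in B) = (i \in B) -> D j i = D1 j i),
  (forall x, x \in X -> (x < k)%N -> (forall p, p \in P -> D x p = 0) \/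
     (exists2 p, p \in P & D x p = 1 /\ forall p', p' \in P -> p' != p -> D x p' = 0)) &
  (forall x1 x2 p, x1 \in X -> x2 \in X -> p \in P -> (x1 < k)%N -> (x2 < k)%N ->
     D x1 p != 0 -> D x2 p != 0 -> x1 = x2)].

Lemma F_Prow k D p i : Inv3 k D -> p \in P -> D p i = 0.
Proof.
move=> [hD _ bl _ _] pP; case: (boolP (i \in B)) => iB.
  by rewrite bl ?(P_inB pP) ?iB // (P_row0 _ hD1 pP).
by apply/eqP; apply: contraNT iB => nz; case: hD => _ /(_ p i (P_inB pP) nz).
Qed.

Lemma F_Pcol k D j p : Inv3 k D -> j \in B -> p \in P -> D j p = 0.
Proof.
move=> [hD _ bl _ _] jB pP; rewrite bl ?jB ?(P_inB pP) //.
exact: P_col0 e1 jB pP.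
Qed.

Lemma F_Xcol k D j x : Inv3 k D -> x \in X -> D j x = 0.
Proof.
move=> [hD _ bl _ _] xX; have xB := X_notB xX.
case: (boolP (j \in B)) => jB.
  by apply/eqP; apply: contraNT xB => nz; case: hD => _ /(_ j x jB nz).
by rewrite bl ?(negbTE jB) ?(negbTE xB) //; apply: X_col0 hD1 e2 xX.
Qed.

Lemma F_Xrow k D x i : Inv3 k D -> x \in X -> i \notin B -> D x i = 0.
Proof.
move=> [hD _ bl _ _] xX iB; have xB := X_notB xX.
by rewrite bl ?(negbTE iB) ?(negbTE xB) //; apply: X_row0 xX iB.
Qed.

Lemma Inv3_op k D m a c l : Inv3 k D -> opOK m a c l ->
  (forall j i, (j \in B) = (i \in B) -> opD D m a c l j i = D j i) ->
  (forall x p, x \in X -> (x < k)%N -> p \in P -> opD D m a c l x p = D x p) ->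
  Inv3 k (opD D m a c l).
Proof.
move=> [hD eq bl h1 h2] ok eb ex; split.
- exact: op_isMAB.
- exact: ABequiv_trans eq (op_equiv _ ok).
- by move=> j i e; rewrite eb // bl.
- move=> x xX xk; case: (h1 x xX xk) => [z|[p pP [d1 d0]]].
    by left => p pP; rewrite ex // z.
  by right; exists p => //; split; [rewrite ex | move=> p' p'P ne; rewrite ex // d0].
- by move=> x1 x2 p x1X x2X pP l1 l2; rewrite !ex //; apply: h2.
Qed.

Definition mu3 (kk : 'I_N) D := (\sum_(p in P) wt (D kk p))%N.

Definition used (kk : 'I_N) D p := [exists x, [&& x \in X, (x < kk)%N & D x p != 0]].

Lemma Inv3_succ D (kk : 'I_N) : Inv3 kk D ->
  ((forall p, p \in P -> D kk p = 0) \/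
   exists2 m, m \in P & [/\ D kk m = 1, (forall p, p \in P -> p != m -> D kk p = 0) &
      ~~ used kk D m]) -> Inv3 kk.+1 D.
Proof.
move=> [a b c h1 h2] hk.
have cs : forall j : 'I_N, (j < kk.+1)%N -> j = kk \/ (j < kk)%N.
  by move=> j; rewrite ltnS leq_eqVlt => /orP [/eqP/ord_inj|]; [left|right].
have key : forall x p, x \in X -> p \in P -> (x < kk)%N -> D kk p != 0 -> D x p != 0 -> False.
  move=> x p xX pP xk n1 n2; case: hk => [z|[m mP [d1 d0 nu]]].
    by move: n1; rewrite z // eqxx.
  have pm : p = m by apply/eqP; apply: contraNT n1 => pm; rewrite d0.
  by move: nu; rewrite -pm; case/negP; apply/existsP; exists x; rewrite xX xk n2.
split=> //.
  move=> x xX /cs [->|xk]; last exact: h1.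
  by case: hk => [z|[m mP [d1 d0 _]]]; [left | right; exists m].
move=> x1 x2 p x1X x2X pP /cs [e1'|l1] /cs [e2'|l2] n1 n2.
- by rewrite e1' e2'.
- by exfalso; rewrite e1' in n1; apply: (key x2 p).
- by exfalso; rewrite e2' in n2; apply: (key x1 p).
- exact: (h2 x1 x2 p).
Qed.

Lemma unusedE D (kk : 'I_N) m x : ~~ used kk D m -> x \in X -> (x < kk)%N -> D x m = 0.
Proof.
move=> nu xX xk; apply/eqP; apply: contraNT nu => nz.
by apply/existsP; exists x; rewrite xX xk nz.
Qed.

Lemma step3_body D (kk : 'I_N) : kk \in X -> Inv3 kk D ->
  (exists D', Inv3 kk.+1 D') \/ (exists D', Inv3 kk D' /\ (mu3 kk D' < mu3 kk D)%N).
Proof.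
move=> kX iv; have [hD _ _ h1 h2] := iv.
have kB := X_notB kX.
case: (pickP (fun p => [&& p \in P, D kk p != 0 & used kk D p])) => [p /and3P [pP nz /existsP [x /and3P [xX xk nzx]]]|noU].
  right; set c := - D kk p.
  have rowx : forall p', p' \in P -> D x p' = (p' == p)%:R.
    case: (h1 x xX xk) => [z|[p0 p0P [d1 d0]]]; first by move: nzx; rewrite z // eqxx.
    have pp0 : p = p0 by apply/eqP; apply: contraNT nzx => ne; rewrite d0.
    by move=> p' p'P; rewrite -pp0 in d1 d0; case: eqP => [->//|/eqP ne]; rewrite d0.
  have ok : opOK kk 1 c x.
    split; first exact: oner_neq0.
    move=> _; split=> //; last by move=> kB'; rewrite kB' in kB.
    by rewrite -(degD hD nzx) (degD hD nz).
  exists (opD D kk 1 c x); split.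
    apply: Inv3_op => //.
      move=> j i e; case: (eqVneq j kk) => [ejk|jk].
        rewrite ejk in e *; rewrite opE_m // (F_Xrow iv xX) ?mulr0 ?addr0 ?mul1r //.
        by move: e; rewrite (negbTE kB) => /esym/negbT.
      by apply: opE_0 => //; apply: F_Xcol iv kX.
    move=> x' p' x'X x'k p'P; apply: opE_0 => //; last exact: F_Xcol iv kX.
    by apply: contraTneq x'k => ->; rewrite ltnn.
  apply: (sum_lt (i0 := p)) => //.
    move=> p' p'P; rewrite opE_m // mul1r (rowx _ p'P) /c.
    case: eqP => [->|_]; last by rewrite mulr0 addr0.
    by rewrite mulr1 addrN wt0.
  by rewrite opE_m // mul1r (rowx _ pP) eqxx /c mulr1 addrN wt0; apply: wt_pos.
have noU' : forall p, p \in P -> D kk p != 0 -> ~~ used kk D p.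
  by move=> p pP nz; move: (noU p); rewrite /= pP nz /= => ->.
case: (pickP (fun q : 'I_N * 'I_N => [&& q.1 \in P, q.2 \in P, D kk q.1 != 0,
     D kk q.2 != 0 & (q.2 < q.1)%N])) => [[m l] /and5P [/= mP lP nzm nzl lm]|noTwo].
  right; set c := D kk l / D kk m.
  have ok : opOK m 1 c l.
    split; first exact: oner_neq0.
    move=> _; split=> //; last by move=> _; apply: P_inB lP.
    by apply: (@addIr _ 1); rewrite (degD hD nzm) (degD hD nzl).
  have mB := P_inB mP; have lB := P_inB lP.
  have km : kk != m by apply: contraNneq kB => ->.
  have lm' : l != m by apply: contraTneq lm => ->; rewrite ltnn.
  exists (opD D m 1 c l); split.
    apply: Inv3_op => //.
      move=> j i e; case: (eqVneq j m) => [->|jm].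
        by rewrite opE_m // !(F_Prow _ iv mP) (F_Prow _ iv lP) mulr0 mulr0 addr0.
      case: (boolP (j \in B)) => jB; first by apply: opE_0 => //; apply: F_Pcol iv jB mP.
      apply: opE_oth => //.
        by apply: contraNneq jB; rewrite e => ->.
      by apply: contraNneq jB; rewrite e => ->.
    move=> x' p' x'X x'k p'P; apply: opE_0 => //.
      by apply: contraNneq (X_notB x'X) => ->.
    exact: unusedE (noU' _ mP nzm) x'X x'k.
  apply: (sum_lt (i0 := l)) => //.
    move=> i' i'S; case: (eqVneq i' l) => [->|i'l].
      by rewrite opE_l // divr1 /c mulrCA mulfV // mulr1 subrr wt0.
    case: (eqVneq i' m) => [->|i'm]; first by rewrite opE_mm // divr1.
    by rewrite opE_oth.
  by rewrite opE_l // divr1 /c mulrCA mulfV // mulr1 subrr wt0; apply: wt_pos.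
case: (pickP (fun p => (p \in P) && (D kk p != 0))) => [m /andP [mP nzm]|noSupp].
  have only : forall p, p \in P -> p != m -> D kk p = 0.
    move=> i iS im; apply/eqP; apply: contraNT im => nzi.
    case: (ltngtP i m) => [il|il|/val_inj -> //].
      by move: (noTwo (m, i)); rewrite /= mP iS nzm nzi il.
    by move: (noTwo (i, m)); rewrite /= mP iS nzm nzi il.
  case: (eqVneq (D kk m) 1) => [d1|n1].
    left; exists D; apply: Inv3_succ => //; right; exists m => //; split=> //.
    exact: noU'.
  right; set a := D kk m.
  have ok : opOK m a 0 m by split=> //; rewrite eqxx.
  have mB := P_inB mP.
  have km : kk != m by apply: contraNneq kB => ->.
  exists (opD D m a 0 m); split.
    apply: Inv3_op => //.
      move=> j i e; case: (eqVneq j m) => [->|jm].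
        by rewrite opE_m // !(F_Prow _ iv mP) mulr0 mul0r addr0.
      case: (boolP (j \in B)) => jB; first by apply: opE_0 => //; apply: F_Pcol iv jB mP.
      apply: opE_oth => //.
        by apply: contraNneq jB; rewrite e => ->.
      by apply: contraNneq jB; rewrite e => ->.
    move=> x' p' x'X x'k p'P; apply: opE_0 => //.
      by apply: contraNneq (X_notB x'X) => ->.
    exact: unusedE (noU' _ mP nzm) x'X x'k.
  apply: (sum_lt (i0 := m)) => //.
    move=> i' i'S; case: (eqVneq i' m) => [->|i'm].
      by rewrite opE_sc // /a mulfV // wt1; apply: wt_pos.
    by rewrite opE_oth.
  by rewrite opE_sc // /a mulfV // wt1 wt_2.
left; exists D; apply: Inv3_succ => //; left => p pP; apply/eqP; move: (noSupp p).
by rewrite /= pP /= => /negbT; rewrite negbK.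
Qed.

Lemma stage3_mu n D (kk : 'I_N) : kk \in X -> (mu3 kk D <= n)%N -> Inv3 kk D ->
  exists D', Inv3 kk.+1 D'.
Proof.
elim: n D => [|n IH] D kS hm iv; case: (step3_body kS iv) => // [[D' [iv' lt]]].
  by move: (leq_trans lt hm).
by apply: (IH D') => //; rewrite -ltnS; apply: leq_trans lt hm.
Qed.

Lemma Inv3_notX D (kk : 'I_N) : kk \notin X -> Inv3 kk D -> Inv3 kk.+1 D.
Proof.
move=> kX [a b c h1 h2]; split=> //.
  have cs : forall j : 'I_N, j \in X -> (j < kk.+1)%N -> (j < kk)%N.
    move=> j jS; rewrite ltnS leq_eqVlt => /orP [/eqP/ord_inj e|//].
    by move: kX; rewrite -e jS.
  by move=> x xX /(cs _ xX); apply: h1.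
have cs : forall j : 'I_N, j \in X -> (j < kk.+1)%N -> (j < kk)%N.
  move=> j jS; rewrite ltnS leq_eqVlt => /orP [/eqP/ord_inj e|//].
  by move: kX; rewrite -e jS.
by move=> x1 x2 p x1X x2X pP /(cs _ x1X) l1 /(cs _ x2X) l2; apply: h2.
Qed.

Lemma stage3_k k : (k <= N)%N -> exists D, Inv3 k D.
Proof.
elim: k => [|k IH] kN.
  exists D1; split=> //; exact: ABequiv_refl.
have [D iv] := IH (ltnW kN).
pose kk := Ordinal kN.
case: (boolP (kk \in X)) => kS.
  exact: (@stage3_mu (mu3 kk D) D kk kS (leqnn _) iv).
by exists D; apply: (Inv3_notX kS iv).
Qed.

Lemma stage3_final : exists D, [/\ isMAB deg B D, ABequiv deg B D1 D & quasi_elem B D].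
Proof.
have [D iv] := stage3_k (leqnn N); have [hD eq bl h1 h2] := iv.
have bB : forall j i, j \in B -> i \in B -> D j i = D1 j i.
  by move=> j i jB iB; rewrite bl // jB iB.
have bnB : forall j i, j \in ~:B -> i \in ~:B -> D j i = D1 j i.
  by move=> j i; rewrite !in_setC => jB iB; rewrite bl // (negbTE jB) (negbTE iB).
have [sB tB eB] := block_eq bB; have [snB tnB enB] := block_eq bnB.
have PE : Pset B D = P by rewrite /Pset sB tB.
have XE : Xset B D = X by rewrite /Xset snB tnB.
exists D; split=> //; split; rewrite ?PE ?XE.
- exact: eB.
- exact: enB.
- move=> x p1 p2 xX p1P p2P n1 n2; case: (h1 x xX (ltn_ord x)) => [z|[p pP [d1 d0]]].
    by move: n1; rewrite z // eqxx.
  have e1' : p1 = p by apply/eqP; apply: contraNT n1 => ne; rewrite d0.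
  have e2' : p2 = p by apply/eqP; apply: contraNT n2 => ne; rewrite d0.
  by rewrite e1' e2'.
- move=> x p xX pP nz; case: (h1 x xX (ltn_ord x)) => [z|[p0 p0P [d1 d0]]].
    by move: nz; rewrite z // eqxx.
  have e' : p = p0 by apply/eqP; apply: contraNT nz => ne; rewrite d0.
  by rewrite e'.
- move=> p x1 x2 pP x1X x2X; apply: h2 => //; exact: ltn_ord.
Qed.

End Stage3.
Lemma part1 D : isMAB deg B D ->
  exists D', [/\ isMAB deg B D', ABequiv deg B D D' & quasi_elem B D'].
Proof.
move=> hD.
have hSB1 : forall m l, m \in B -> l \in B -> m \in B -> l \in B by [].
have [D1 [hD1 eq1 _ el1]] := stage_final (@hS_B) hSB1 hD.
have hSB2 : forall m l, m \in ~:B -> l \in ~:B -> m \in B -> l \in B.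
  by move=> m l; rewrite in_setC => /negbTE ->.
have [D2 [hD2 eq2 oth2 el2]] := stage_final (@hS_nB) hSB2 hD1.
have el2B : elem_on D2 B.
  have bb : forall j i, j \in B -> i \in B -> D2 j i = D1 j i.
    by move=> j i jB iB; apply: oth2; rewrite in_setC negbK.
  by have [_ _ h] := block_eq bb; apply: h.
have [D3 [hD3 eq3 q3]] := stage3_final hD2 el2B el2.
exists D3; split=> //.
exact: ABequiv_trans (ABequiv_trans eq1 eq2) eq3.
Qed.
Notation dl t := (delta_mx 0 t : 'rV[E]_N).

Lemma dlE t i : (dl t) 0 i = (i == t)%:R.
Proof. by rewrite mxE eqxx. Qed.

Lemma chiSP (v : 'rV[E]_N) (T : {set 'I_N}) :
  (v <= chiS E T)%MS <-> (forall i, i \notin T -> v 0 i = 0).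
Proof.
split.
  by case/submxP => a -> i iT; rewrite /chiS mul_mx_diag !mxE (negbTE iT) mulr0.
move=> h; have -> : v = v *m chiS E T.
  apply/matrixP => r i; rewrite ord1 /chiS mul_mx_diag !mxE.
  by case: (boolP (i \in T)) => iT; [rewrite mulr1 | rewrite h // mulr0].
exact: submxMl.
Qed.

Definition closedP (Pr : 'rV[E]_N -> Prop) :=
  [/\ Pr 0, forall v w, Pr v -> Pr w -> Pr (v + w) & forall a v, Pr v -> Pr (a *: v)].

Lemma closedP_coord Pr (v : 'rV[E]_N) : closedP Pr -> (forall i, v 0 i != 0 -> Pr (dl i)) -> Pr v.
Proof.
move=> [h0 hD hZ] h; rewrite (row_sum_delta v).
apply: (big_ind Pr) => // i _.
case: (eqVneq (v 0 i) 0) => [->|nz]; first by rewrite scale0r.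
by apply: hZ; apply: h.
Qed.

Lemma mx_coord (m : nat) (V : 'M[E]_(m, N)) (v : 'rV[E]_N) : (forall i, v 0 i != 0 -> (dl i <= V)%MS) ->
  (v <= V)%MS.
Proof.
apply: (closedP_coord (Pr := fun w => (w <= V)%MS)); split.
- exact: sub0mx.
- by move=> a b ha hb; apply: addmx_sub.
- by move=> a w h; apply: scalemx_sub.
Qed.

Lemma LT (T : {set 'I_N}) G : G \in unitmx ->
  (forall j i, j \in T -> G j i != 0 -> i \in T) ->
  forall x : 'rV[E]_N, (x *m G <= chiS E T)%MS = (x <= chiS E T)%MS.
Proof.
move=> uG hT.
have fw : forall x : 'rV[E]_N, (x <= chiS E T)%MS -> (x *m G <= chiS E T)%MS.
  move=> x /chiSP hx; apply/chiSP => i iT; apply/eqP; apply: contraT => /mulmx_nz [j [nx nG]].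
  case: (boolP (j \in T)) => jT; first by move: (hT _ _ jT nG); rewrite (negbTE iT).
  by move: nx; rewrite hx ?eqxx.
move=> x; apply/idP/idP; last exact: fw.
have s1 : (chiS E T *m G <= chiS E T)%MS.
  by apply/row_subP => j; rewrite row_mul; apply: fw; apply: row_sub.
have s2 : (chiS E T <= chiS E T *m G)%MS.
  rewrite -(mxrank_leqif_sup s1).2 mxrankMfree //; by rewrite row_free_unit.
move=> h; have /submxP [a e] := submx_trans h s2.
have -> : x = a *m chiS E T.
  by apply: (row_free_inj (_ : row_free G)); [rewrite row_free_unit | rewrite /= e mulmxA].
exact: submxMl.
Qed.

Definition top (v : 'rV[E]_N) m := v 0 m != 0 /\ (forall i, (m < i)%N -> v 0 i = 0).

Lemma top_ex (v : 'rV[E]_N) : v != 0 -> exists m, top v m.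
Proof.
move=> nz; case: (pickP (fun i => v 0 i != 0)) => [i0 h0|none]; last first.
  by move: nz; have -> : v = 0; [apply/matrixP => r i; rewrite ord1 mxE; apply/eqP; move: (none i) => /= /negbT; rewrite negbK | rewrite eqxx].
case: (@arg_maxnP _ i0 (fun i => v 0 i != 0) val h0) => m hm mx.
exists m; split=> // i mi; apply/eqP; apply: contraT => nzi.
by move: (mx i nzi); rewrite /geq /= leqNgt mi.
Qed.

Lemma top_uniq (v : 'rV[E]_N) m m' : top v m -> top v m' -> m = m'.
Proof.
move=> [n1 z1] [n2 z2]; apply: val_inj; case: (ltngtP m m') => // h.
  by move: n2; rewrite z1 ?eqxx.
by move: n1; rewrite z2 ?eqxx.
Qed.

Lemma good_diag G m : good G -> G \in unitmx -> G m m != 0.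
Proof.
move=> [t _ _] uG; have tr : is_trig_mx G.
  apply/is_trig_mxP => i j ij; apply/eqP; apply: contraT => /t; by rewrite leqNgt ij.
move: uG; rewrite unitmxE det_trig // unitfE => /prodf_neq0 h; exact: h.
Qed.

Lemma topG G (v : 'rV[E]_N) m : good G -> G \in unitmx -> top v m -> top (v *m G) m.
Proof.
move=> gG uG [nz z]; have [t _ _] := gG; split.
  rewrite mxE (bigD1 m) //= big1 ?addr0; first by rewrite mulf_neq0 // good_diag.
  move=> j jm; case: (ltngtP m j) => [mj|jm'|/val_inj e]; first by rewrite z // mul0r.
    by rewrite (_ : G j m = 0) ?mulr0 //; apply/eqP; apply: contraT => /t; rewrite leqNgt jm'.
  by move: jm; rewrite e eqxx.
move=> i mi; apply/eqP; apply: contraT => /mulmx_nz [j [nv nG]].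
have ij := t _ _ nG; case: (ltnP m j) => mj; first by move: nv; rewrite z ?eqxx.
by move: (leq_ltn_trans (leq_trans ij mj) mi); rewrite ltnn.
Qed.

Lemma topG_inv G (v : 'rV[E]_N) m : good G -> G \in unitmx -> top (v *m G) m -> top v m.
Proof.
move=> gG uG tv; have nz : v != 0.
  by apply/eqP => e; case: tv; rewrite e mul0mx mxE eqxx.
have [M tM] := top_ex nz; have := topG gG uG tM => tM'.
by rewrite (top_uniq tv tM').
Qed.

Definition pivP (Pr : 'rV[E]_N -> Prop) m := exists v, Pr v /\ top v m.

Lemma piv_inv G (Pr1 Pr : 'rV[E]_N -> Prop) m : good G -> G \in unitmx ->
  (forall w, Pr1 (w *m G) <-> Pr w) -> (pivP Pr1 m <-> pivP Pr m).
Proof.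
move=> gG uG e; split=> [[v [h t]]|[w [h t]]].
  exists (v *m invmx G); split.
    by apply/e; rewrite mulmxKV.
  by apply: (topG_inv gG uG); rewrite mulmxKV.
by exists (w *m G); split; [apply/e | apply: topG].
Qed.

Lemma top_dl t : top (dl t) t.
Proof.
split; first by rewrite dlE eqxx oner_neq0.
by move=> i ti; rewrite dlE; case: eqP => // e; move: ti; rewrite e ltnn.
Qed.

Lemma piv_coord (Pr : 'rV[E]_N -> Prop) (T : 'I_N -> Prop) m :
  (forall v, Pr v -> forall i, v 0 i != 0 -> T i) -> (forall t, T t -> Pr (dl t)) ->
  (pivP Pr m <-> T m).
Proof.
move=> h1 h2; split=> [[v [pv [nz _]]]|tm]; first exact: h1 pv m nz.
by exists (dl m); split; [apply: h2 | apply: top_dl].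
Qed.
Definition Fk (k : nat) : {set 'I_N} := [set i : 'I_N | (i < k)%N].
Definition PZ D (v : 'rV[E]_N) := (v <= chiS E B)%MS /\ v *m D = 0.
Definition PC D (v : 'rV[E]_N) := (v *m D <= chiS E B)%MS.
Definition PRB D (v : 'rV[E]_N) := exists u w, (w <= chiS E B)%MS /\ v = u *m D + w.
Definition PW D k (v : 'rV[E]_N) := exists u u', [/\ (u <= chiS E (Fk k))%MS,
  (u *m D <= chiS E B)%MS, (u' <= chiS E B)%MS & v = u *m D + u' *m D].

Section Inv.
Variables (G D : 'M[E]_N).
Hypotheses (gG : good G) (uG : G \in unitmx).
Local Notation D1 := (invmx G *m D *m G).

Lemma keyG (x : 'rV[E]_N) : (x *m G) *m D1 = x *m D *m G.
Proof. by rewrite !mulmxA -(mulmxA x G (invmx G)) mulmxV // mulmx1. Qed.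

Lemma LTB (x : 'rV[E]_N) : (x *m G <= chiS E B)%MS = (x <= chiS E B)%MS.
Proof. by apply: LT => //; case: gG. Qed.

Lemma LTF k (x : 'rV[E]_N) : (x *m G <= chiS E (Fk k))%MS = (x <= chiS E (Fk k))%MS.
Proof.
apply: LT => // j i; rewrite !inE => jk nz; case: gG => t _ _.
exact: leq_ltn_trans (t _ _ nz) jk.
Qed.

Lemma invK (x : 'rV[E]_N) : x *m invmx G *m G = x.
Proof. by rewrite mulmxKV. Qed.

Lemma PZ_inv w : PZ D1 (w *m G) <-> PZ D w.
Proof.
rewrite /PZ keyG LTB; split=> [[h1 h2]|[h1 h2]]; split=> //.
  by rewrite -[w *m D](mulmxK uG) h2 mul0mx.
by rewrite h2 mul0mx.
Qed.

Lemma PC_inv w : PC D1 (w *m G) <-> PC D w.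
Proof. by rewrite /PC keyG LTB. Qed.

Lemma PRB_inv w : PRB D1 (w *m G) <-> PRB D w.
Proof.
split=> [[u [x [xB e]]]|[u [x [xB e]]]].
  exists (u *m invmx G), (x *m invmx G); split; first by rewrite -LTB invK.
  apply: (row_free_inj (_ : row_free G)); first by rewrite row_free_unit.
  by rewrite /= e mulmxDl invK !mulmxA.
exists (u *m G), (x *m G); split; first by rewrite LTB.
by rewrite keyG e mulmxDl.
Qed.

Lemma PW_inv k w : PW D1 k (w *m G) <-> PW D k w.
Proof.
split=> [[u [u' [uF uB u'B e]]]|[u [u' [uF uB u'B e]]]].
  exists (u *m invmx G), (u' *m invmx G); split.
  - by rewrite -LTF invK.
  - by rewrite -LTB -keyG invK.
  - by rewrite -LTB invK.
  apply: (row_free_inj (_ : row_free G)); first by rewrite row_free_unit.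
  by rewrite /= e mulmxDl -!keyG !invK.
exists (u *m G), (u' *m G); split.
- by rewrite LTF.
- by rewrite keyG LTB.
- by rewrite LTB.
by rewrite !keyG e mulmxDl.
Qed.

End Inv.
Section Quasi.
Variable (D : 'M[E]_N).
Hypotheses (hD : isMAB deg B D) (hq : quasi_elem B D).
Local Notation Q := (srcs D B).
Local Notation R := (tgts D B).
Local Notation Y := (srcs D (~:B)).
Local Notation Z := (tgts D (~:B)).
Local Notation P := (Pset B D).
Local Notation X := (Xset B D).

Lemma eqR_nz (i t : 'I_N) : ((i == t)%:R : E) != 0 -> i = t.
Proof. by case: (eqVneq i t) => // _ /=; rewrite eqxx. Qed.

Lemma eB : elem_on D B. Proof. by case: hq. Qed.
Lemma enB : elem_on D (~:B). Proof. by case: hq. Qed.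

Lemma bD j i : j \in B -> D j i != 0 -> i \in B.
Proof. by case: hD => _; apply. Qed.

Lemma rowB j : j \in B -> (forall i, D j i = 0) \/
  (exists2 t, t \in R & forall i, D j i = (i == t)%:R).
Proof.
move=> jB; have [h1 _] := eB; case: (h1 j jB) => [z|[t tB st]].
  left=> i; case: (boolP (i \in B)) => iB; first exact: z.
  by apply/eqP; apply: contraT => /(bD jB); rewrite (negbTE iB).
right; exists t; first by rewrite inE tB; apply/existsP; exists j; rewrite jB.
move=> i; case: (boolP (i \in B)) => iB; first exact: sends_toP st iB.
rewrite (_ : (i == t) = false); last by apply: contraNF iB => /eqP ->.
by apply/eqP; apply: contraT => /(bD jB); rewrite (negbTE iB).
Qed.

Lemma inR t : t \in R -> t \in B /\ exists2 q, q \in B & sends_to D B q t.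
Proof. by rewrite inE => /andP [tB /existsP [q /andP [qB sq]]]; split=> //; exists q. Qed.

Lemma colR q r : q \in B -> sends_to D B q r -> r \in B ->
  forall j, j \in B -> D j r = (j == q)%:R.
Proof.
move=> qB sq rB j jB; have [h1 h2] := eB.
case: (eqVneq j q) => [->|jq]; first by rewrite (sends_to1 sq rB).
case: (h1 j jB) => [z|[t tB st]]; first by rewrite z.
rewrite (sends_toP st rB); case: eqP => // e; rewrite -e in st.
by move: jq; rewrite (h2 j q r jB qB rB st sq) eqxx.
Qed.

Lemma rowq q r : q \in B -> sends_to D B q r -> r \in B -> forall i, D q i = (i == r)%:R.
Proof.
move=> qB sq rB; case: (rowB qB) => [z|[t tR e]].
  by move: (sends_to1 sq rB); rewrite z => /eqP; rewrite eq_sym oner_eq0.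
have tr : t = r.
  move: (sends_to1 sq rB); rewrite e; case: (eqVneq r t) => [->//|_] /=.
  by move/eqP; rewrite eq_sym oner_eq0.
by rewrite -tr.
Qed.

Lemma sum_nz (P0 : pred 'I_N) (F : 'I_N -> E) : \sum_(k | P0 k) F k != 0 ->
  exists k, P0 k /\ F k != 0.
Proof.
move=> h; case: (pickP (fun k => P0 k && (F k != 0))) => [k /andP [? ?]|none].
  by exists k.
by move: h; rewrite big1 ?eqxx // => k pk; move: (none k); rewrite /= pk /= => /negbT; rewrite negbK => /eqP.
Qed.

Lemma DD0 j i : \sum_k D j k * D k i = 0.
Proof. by case: hD => [[DD _ _] _]; move/matrixP: DD => /(_ j i); rewrite !mxE. Qed.

Lemma rowR r i : r \in R -> D r i = 0.
Proof.
move=> rR; have [rB [q qB sq]] := inR rR.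
case: (rowB rB) => [z|[t tR e]]; first exact: z.
exfalso; move: (DD0 q t).
have -> : \sum_k D q k * D k t = \sum_k (k == r)%:R * D r t.
  by apply: eq_bigr => k _; rewrite (rowq qB sq rB); case: eqP => [->//|_]; rewrite !mul0r.
by rewrite sum_delta e eqxx; apply/eqP; exact: oner_neq0.
Qed.

Lemma nBE i : (i \in ~:B) = (i \notin B). Proof. by rewrite in_setC. Qed.

Lemma colZ y z : y \notin B -> sends_to D (~:B) y z -> z \notin B ->
  forall j, D j z = (j == y)%:R.
Proof.
move=> yB sy zB j; have [h1 h2] := enB.
case: (boolP (j \in B)) => jB.
  rewrite (_ : (j == y) = false); last by apply: contraNF yB => /eqP <-.
  by apply/eqP; apply: contraT => /(bD jB); rewrite (negbTE zB).
case: (eqVneq j y) => [->|jy]; first by rewrite (sends_to1 sy) // nBE.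
case: (h1 j); first by rewrite nBE.
  by move=> z0; rewrite z0 // nBE.
move=> [t tB st]; rewrite (sends_toP st); last by rewrite nBE.
case: eqP => // e; rewrite -e in st.
by move: jy; rewrite (h2 j y z) ?nBE ?eqxx.
Qed.

Lemma inY j : j \in Y -> j \notin B /\ exists2 z, z \notin B & sends_to D (~:B) j z.
Proof.
rewrite inE nBE => /andP [jB /existsP [i /andP [iB nz]]]; split=> //.
have [h1 _] := enB; case: (h1 j); first by rewrite nBE.
  by move=> z0; move: nz; rewrite z0 ?eqxx.
by move=> [z zB sz]; exists z => //; rewrite -nBE.
Qed.

Lemma notY j i : j \notin B -> j \notin Y -> i \notin B -> D j i = 0.
Proof.
move=> jB jY iB; apply/eqP; apply: contraT => nz; case/negP: jY.
by rewrite inE nBE jB; apply/existsP; exists i; rewrite nBE iB.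
Qed.

Lemma inZ z : z \in Z -> z \notin B /\ exists2 y, y \notin B & sends_to D (~:B) y z.
Proof.
rewrite inE nBE => /andP [zB /existsP [y /andP [yB sy]]]; split=> //.
by exists y => //; rewrite -nBE.
Qed.

Lemma ZnotY z : z \in Z -> z \notin Y.
Proof.
move=> zZ; apply/negP => zY; have [zB [y yB sy]] := inZ zZ.
have [_ [w wB sz]] := inY zY.
move: (DD0 y w).
have -> : \sum_k D y k * D k w = \sum_k (k == z)%:R * D z w.
  apply: eq_bigr => k _; case: (boolP (k \in B)) => kB.
    rewrite (_ : D k w = 0); last by apply/eqP; apply: contraT => /(bD kB); rewrite (negbTE wB).
    by rewrite mulr0; case: eqP => [e|]; [move: kB; rewrite e (negbTE zB) | rewrite mul0r].
  rewrite (sends_toP sy); last by rewrite nBE.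
  by case: eqP => [->|]; rewrite ?mul1r ?mul0r.
rewrite sum_delta (sends_to1 sz) ?nBE //.
by move=> /eqP; rewrite oner_eq0.
Qed.

Lemma rowZ z i : z \in Z -> D z i != 0 -> i \in R.
Proof.
move=> zZ nz; have [zB [y yB sy]] := inZ zZ.
move: (DD0 y i); rewrite (bigID (fun k => k \in B)) /=.
have -> : \sum_(k | k \notin B) D y k * D k i = D z i.
  rewrite (bigD1 z) //= (sends_to1 sy) ?nBE // mul1r big1 ?addr0 // => k /andP [kB kz].
  by rewrite (sends_toP sy) ?nBE // (negbTE kz) mul0r.
move/eqP; rewrite addr_eq0 => /eqP hs.
have : \sum_(k in B) D y k * D k i != 0 by rewrite hs oppr_eq0.
case/sum_nz => k [kB]; rewrite mulf_eq0 negb_or => /andP [_ nki].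
case: (rowB kB) => [z0|[t tR e]]; first by move: nki; rewrite z0 eqxx.
by move: nki; rewrite e => /eqR_nz ->.
Qed.

Lemma noQ j q : (forall i, i \notin B -> D j i = 0) -> q \in Q -> D j q = 0.
Proof.
move=> sj; rewrite inE => /andP [qB /existsP [r0 /andP [r0B nz0]]].
case: (rowB qB) => [z0|[r rR e]]; first by move: nz0; rewrite z0 eqxx.
have [rB _] := inR rR.
have sq : sends_to D B q r by apply: sends_toI => i' _; rewrite e.
move: (DD0 j r).
have -> : \sum_k D j k * D k r = \sum_k (k == q)%:R * D j q.
  apply: eq_bigr => k _; case: (boolP (k \in B)) => kB.
    by rewrite (colR qB sq rB kB); case: eqP => [->|_]; rewrite ?mulr1 ?mul1r ?mulr0 ?mul0r.
  rewrite sj // mul0r; case: eqP => [e'|_]; last by rewrite mul0r.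
  by move: kB; rewrite e' qB.
by rewrite sum_delta.
Qed.

Lemma rowX x i : x \in X -> D x i != 0 -> i \in R \/ i \in P.
Proof.
move=> xX nz.
have iB : i \in B by apply: contraT => iB; move: nz; rewrite X_row0 ?eqxx.
case: (boolP (i \in R)) => iR; [by left | right].
rewrite /Pset in_setD in_setU negb_or (negbTE iR) andbT iB andbT.
apply/negP => iQ; move: nz; rewrite noQ ?eqxx //.
by move=> i' i'B; apply: X_row0.
Qed.

Lemma classify j i : j \notin Y -> D j i != 0 -> i \in R \/ (j \in X /\ i \in P).
Proof.
move=> jY nz; case: (boolP (j \in B)) => jB.
  case: (rowB jB) => [z0|[t tR e]]; first by move: nz; rewrite z0 eqxx.
  by left; move: nz; rewrite e => /eqR_nz ->.
case: (boolP (j \in Z)) => jZ; first by left; apply: rowZ jZ nz.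
have jX : j \in X by rewrite /Xset in_setD in_setU negb_or jY jZ in_setC jB.
by case: (rowX jX nz) => h; [left | right].
Qed.

Lemma uY0 (u : 'rV[E]_N) : (u *m D <= chiS E B)%MS -> forall y, y \in Y -> u 0 y = 0.
Proof.
move=> /chiSP h y yY; have [yB [z zB sy]] := inY yY.
move: (h z zB); rewrite mxE.
under eq_bigr do rewrite (colZ yB sy zB).
by under eq_bigr do rewrite mulrC; rewrite sum_delta.
Qed.

Lemma P_notR p : p \in P -> p \notin R.
Proof. by rewrite /Pset in_setD in_setU negb_or => /andP [/andP [_ ->]]. Qed.

Lemma P_notQ p : p \in P -> p \notin Q.
Proof. by rewrite /Pset in_setD in_setU negb_or => /andP [/andP [-> _]]. Qed.

Lemma R_B r : r \in R -> r \in B. Proof. by case/inR. Qed.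

Lemma noQv (w : 'rV[E]_N) q : (forall i, i \notin B -> w 0 i = 0) -> w *m D = 0 ->
  q \in Q -> w 0 q = 0.
Proof.
move=> sw wD; rewrite inE => /andP [qB /existsP [r0 /andP [r0B nz0]]].
case: (rowB qB) => [z0|[r rR e]]; first by move: nz0; rewrite z0 eqxx.
have [rB _] := inR rR.
have sq : sends_to D B q r by apply: sends_toI => i' _; rewrite e.
move/matrixP: wD => /(_ 0 r); rewrite !mxE.
have -> : \sum_k w 0 k * D k r = \sum_k (k == q)%:R * w 0 q.
  apply: eq_bigr => k _; case: (boolP (k \in B)) => kB.
    by rewrite (colR qB sq rB kB); case: eqP => [->|_]; rewrite ?mulr1 ?mul1r ?mulr0 ?mul0r.
  rewrite sw // mul0r; case: eqP => [e'|_]; last by rewrite mul0r.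
  by move: kB; rewrite e' qB.
by rewrite sum_delta.
Qed.

Lemma conn_supp (v : 'rV[E]_N) : (v <= conn_im B D)%MS -> forall i, v 0 i != 0 ->
  i \in R \/ (i \in P /\ exists x, x \in X /\ D x i != 0).
Proof.
rewrite /conn_im sub_capmx => /andP [/submxP [u ev] vB] i nz.
have uY := uY0 (_ : (u *m D <= chiS E B)%MS).
rewrite ev in nz vB; case/mulmx_nz: nz => j [nu nD].
have jY : j \notin Y by apply: contraNN nu => jY; rewrite uY.
case: (classify jY nD) => [|[jX iP]]; [by left | right].
by split=> //; exists j.
Qed.

Lemma iota_supp (S : {set 'I_N}) (v : 'rV[E]_N) : S \subset B ->
  (v <= iota_im B D S)%MS -> forall i, v 0 i != 0 -> i \in R \/ (i \in P /\ i \in S).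
Proof.
move=> SB /sub_addsmxP [[u1 u2] /= ev] i nz.
set c := u1 *m (kermx D :&: chiS E S)%MS in ev.
have : (c <= kermx D :&: chiS E S)%MS by apply: submxMl.
rewrite sub_capmx sub_kermx => /andP [/eqP cD /chiSP cS].
move: nz; rewrite ev mxE; case: (eqVneq (c 0 i) 0) => [->|nc]; rewrite ?add0r => nz.
  move: nz; rewrite mulmxA => /mulmx_nz [j [nu nD]].
  have jB : j \in B.
    by apply: contraT => jB; move: nu; have /chiSP -> := submxMl u2 (chiS E B); rewrite ?eqxx.
  case: (rowB jB) => [z0|[t tR e]]; first by move: nD; rewrite z0 eqxx.
  by left; move: nD; rewrite e => /eqR_nz ->.
have iS : i \in S by apply: contraT => iS; move: nc; rewrite cS ?eqxx.
have iB : i \in B by apply: (subsetP SB).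
case: (boolP (i \in R)) => iR; [by left | right; split=> //].
rewrite /Pset in_setD in_setU negb_or (negbTE iR) andbT iB andbT.
apply/negP => iQ; move: nc; rewrite noQv ?eqxx // => i' i'B.
by apply: cS; apply: contraNN i'B; apply: (subsetP SB).
Qed.

Lemma dlR r : r \in R -> (dl r <= chiS E B *m D)%MS /\ (dl r <= D)%MS.
Proof.
move=> rR; have [rB [q qB sq]] := inR rR.
have e : dl r = dl q *m D.
  apply/matrixP => a b; rewrite ord1 -rowE dlE mxE (rowq qB sq rB) //.
have dq : (dl q <= chiS E B)%MS by apply/chiSP => i iB; rewrite dlE; case: eqP => // ei; move: iB; rewrite ei qB.
by rewrite e; split; [apply: submxMr | apply: submxMl].
Qed.

Lemma dlB t : t \in B -> (dl t <= chiS E B)%MS.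
Proof. by move=> tB; apply/chiSP => i iB; rewrite dlE; case: eqP => // ei; move: iB; rewrite ei tB. Qed.

Lemma dlP x p : x \in X -> p \in P -> D x p != 0 -> (dl p <= D)%MS.
Proof.
move=> xX pP nz; have [_ _ un one _] := hq.
set w := row x D - dl p.
have wD : (w <= D)%MS.
  apply: mx_coord => i; rewrite /w !mxE eqxx.
  case: (eqVneq i p) => [->|ip]; first by rewrite (one x p) // subrr eqxx.
  rewrite subr0 => nzi; case: (rowX xX nzi) => [iR|iP]; first by case: (dlR iR).
  by move: ip; rewrite (un x i p) ?eqxx.
have -> : dl p = row x D + (-1) *: w by rewrite /w scaleN1r opprB addrC subrK.
by apply: addmx_sub; [apply: row_sub | apply: scalemx_sub].
Qed.

Lemma Ispace_supp (S : {set 'I_N}) (v : 'rV[E]_N) : S \subset B ->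
  (v <= Ispace B D S)%MS -> forall i, v 0 i != 0 ->
  i \in R \/ [/\ i \in P, i \in S & exists x, x \in X /\ D x i != 0].
Proof.
move=> SB; rewrite /Ispace sub_capmx => /andP [h1 h2] i nz.
case: (iota_supp SB h1 nz) => [|[iP iS]]; first by left.
case: (conn_supp h2 nz) => [|[_ ex]]; first by left.
by right.
Qed.

Lemma Ispace_dl (S : {set 'I_N}) t :
  t \in R \/ [/\ t \in P, t \in S & exists x, x \in X /\ D x t != 0] ->
  (dl t <= Ispace B D S)%MS.
Proof.
rewrite /Ispace sub_capmx /iota_im /conn_im sub_capmx => [[tR|[tP tS [x [xX nz]]]]].
  have [h1 h2] := dlR tR; have tB := R_B tR.
  by rewrite (submx_trans h1 (addsmxSr _ _)) h2 dlB.
have tB := P_inB tP.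
rewrite (dlP xX tP nz) dlB // !andbT.
apply: submx_trans (addsmxSl _ _); rewrite sub_capmx sub_kermx.
apply/andP; split; last by apply/chiSP => i iS; rewrite dlE; case: eqP => // ei; move: iS; rewrite ei tS.
apply/eqP; apply/matrixP => a b; rewrite ord1 -rowE mxE (P_row0 _ hD tP) mxE //.
Qed.

Lemma part2 b : b \in Hset B D <-> (b \in P /\ exists x, x \in X /\ D x b != 0).
Proof.
rewrite /Hset inE /essential.
set S1 := [set c in B | (c <= b)%N]; set S0 := [set c in B | (c < b)%N].
have S1B : S1 \subset B by apply/subsetP => c; rewrite inE => /andP [].
have S0B : S0 \subset B by apply/subsetP => c; rewrite inE => /andP [].
split.
  case/andP => bB ne.
  case: (boolP (b \in P)) => bP; last first.
    exfalso; case/negP: ne; apply/andP; split; apply/row_subP => r; apply: mx_coord => i nz;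
      apply: Ispace_dl.
      case: (Ispace_supp S1B (row_sub r _) nz) => [|[iP iS ex]]; first by left.
      right; split=> //; rewrite inE; move: iS; rewrite inE => /andP [-> /=].
      by rewrite leq_eqVlt => /orP [/eqP/val_inj e|//]; move: bP; rewrite -e iP.
    case: (Ispace_supp S0B (row_sub r _) nz) => [|[iP iS ex]]; first by left.
    right; split=> //; rewrite inE; move: iS; rewrite inE => /andP [-> /=]; exact: ltnW.
  split=> //.
  case: (pickP (fun x => (x \in X) && (D x b != 0))) => [x /andP [xX nz]|none].
    by exists x.
  exfalso; case/negP: ne; apply/andP; split; apply/row_subP => r; apply: mx_coord => i nz;
    apply: Ispace_dl.
    case: (Ispace_supp S1B (row_sub r _) nz) => [|[iP iS [x [xX nzx]]]]; first by left.
    right; split=> //; last by exists x.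
    rewrite inE; move: iS; rewrite inE => /andP [-> /=].
    rewrite leq_eqVlt => /orP [/eqP/val_inj e|//].
    by move: (none x); rewrite /= xX -e nzx.
  case: (Ispace_supp S0B (row_sub r _) nz) => [|[iP iS ex]]; first by left.
  right; split=> //; rewrite inE; move: iS; rewrite inE => /andP [-> /=]; exact: ltnW.
move=> [bP [x [xX nz]]]; rewrite (P_inB bP) /=; apply/negP => /andP [h _].
have d1 : (dl b <= Ispace B D S1)%MS.
  by apply: Ispace_dl; right; split=> //; [rewrite inE (P_inB bP) leqnn | exists x].
have := Ispace_supp S0B (submx_trans d1 h) (_ : dl b 0 b != 0).
rewrite dlE eqxx oner_neq0 => /(_ isT) [bR|[_ bS _]].
  by move: (P_notR bP); rewrite bR.
by move: bS; rewrite inE ltnn andbF.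
Qed.

Lemma notB_Y_inv j : j \notin B -> j \notin Y -> j \notin Z -> j \in X.
Proof. by move=> jB jY jZ; rewrite /Xset in_setD in_setU negb_or jY jZ in_setC jB. Qed.

Lemma X_char x : x \in X -> [/\ x \notin B, x \notin Y & x \notin Z].
Proof. by rewrite /Xset in_setD in_setU negb_or in_setC => /andP [/andP [-> ->] ->]. Qed.

Lemma P_char p : p \in B -> p \notin Q -> p \notin R -> p \in P.
Proof. by move=> pB pQ pR; rewrite /Pset in_setD in_setU negb_or pQ pR pB. Qed.

Lemma piv_PZ m : pivP (PZ D) m <-> (m \in P \/ m \in R).
Proof.
apply: (piv_coord (T := fun m => m \in P \/ m \in R)).
  move=> v [/chiSP vB vD] i nz.
  have iB : i \in B by apply: contraT => iB; move: nz; rewrite vB ?eqxx.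
  case: (boolP (i \in R)) => iR; [by right | left].
  apply: P_char => //; apply/negP => iQ; move: nz; rewrite noQv ?eqxx //.
move=> t tPR; have tB : t \in B by case: tPR => [/P_inB|/R_B].
split; first exact: dlB.
apply/matrixP => a b; rewrite ord1 -rowE mxE mxE.
by case: tPR => [tP|tR]; [rewrite (P_row0 _ hD tP) | rewrite rowR].
Qed.

Lemma piv_PC m : pivP (PC D) m <-> (m \notin Y).
Proof.
apply: (piv_coord (T := fun m => m \notin Y)).
  by move=> v vD i nz; apply: contraNN nz => iY; rewrite (uY0 vD) ?eqxx.
move=> t tY; rewrite /PC -rowE; apply/chiSP => i iB; rewrite mxE.
case: (boolP (t \in B)) => tB; last exact: notY.
by apply/eqP; apply: contraT => /(bD tB); rewrite (negbTE iB).
Qed.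

Lemma piv_PRB m : pivP (PRB D) m <-> (m \in B \/ m \in Z).
Proof.
apply: (piv_coord (T := fun m => m \in B \/ m \in Z)).
  move=> v [u [w [/chiSP wB ->]]] i; rewrite mxE.
  case: (boolP (i \in B)) => iB; first by left.
  rewrite wB // addr0 => /mulmx_nz [j [_ nD]]; right.
  have jB : j \notin B by apply: contraNN iB => jB; exact: bD nD.
  have jY : j \in Y by apply: contraT => jY; move: nD; rewrite notY ?eqxx.
  have [_ [z zB sz]] := inY jY.
  move: nD; rewrite (sends_toP sz) ?nBE // => /eqR_nz ->.
  by rewrite inE nBE zB; apply/existsP; exists j; rewrite nBE jB.
move=> t [tB|tZ].
  by exists 0, (dl t); split; [apply: dlB | rewrite mul0mx add0r].
have [tB [y yB sy]] := inZ tZ.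
exists (dl y), (dl t - dl y *m D); split; last by rewrite addrC subrK.
apply/chiSP => i iB; rewrite -rowE !mxE (sends_toP sy) ?nBE // eqxx /=.
by rewrite subrr.
Qed.

Lemma PW_closed k : closedP (PW D k).
Proof.
split.
- exists 0, 0; split; rewrite ?mul0mx ?sub0mx ?addr0 //.
- move=> v w [u1 [u1' [a1 b1 c1 ->]]] [u2 [u2' [a2 b2 c2 ->]]].
  exists (u1 + u2), (u1' + u2'); split; rewrite ?mulmxDl ?addmx_sub //.
  by rewrite addrACA.
- move=> a v [u [u' [a1 b1 c1 ->]]]; exists (a *: u), (a *: u'); split;
    rewrite -?scalemxAl ?scalemx_sub //.
  by rewrite scalerDr.
Qed.

Lemma piv_PW k m : pivP (PW D k) m <->
  (m \in R \/ (m \in P /\ exists x, [/\ x \in X, (x < k)%N & D x m != 0])).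
Proof.
apply: (piv_coord (T := fun m => m \in R \/ (m \in P /\ exists x, [/\ x \in X, (x < k)%N & D x m != 0]))).
  move=> v [u [u' [uF uB u'B ->]]] i; rewrite mxE.
  case: (eqVneq ((u' *m D) 0 i) 0) => [->|nz']; rewrite ?addr0.
    case/mulmx_nz => j [nu nD].
    have jY : j \notin Y by apply: contraNN nu => jY; rewrite (uY0 uB).
    have jk : (j < k)%N.
      by move/chiSP: uF => uF; move: nu; apply: contraNT => jk; rewrite uF ?inE // -leqNgt.
    case: (classify jY nD) => [|[jX iP]]; [by left | by right; split=> //; exists j].
  move=> _; left; case/mulmx_nz: nz' => j [nu nD].
  have jB : j \in B by move/chiSP: u'B => u'B; apply: contraT => jB; move: nu; rewrite u'B ?eqxx.
  case: (rowB jB) => [z0|[t tR e]]; first by move: nD; rewrite z0 eqxx.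
  by move: nD; rewrite e => /eqR_nz ->.
move=> t [tR|[tP [x [xX xk nz]]]].
  have [h _] := dlR tR; case/submxP: h => a e.
  exists 0, (a *m chiS E B); split; rewrite ?mul0mx ?sub0mx ?add0r ?submxMl //.
  by rewrite e mulmxA.
have [_ _ un one _] := hq.
have PWx : PW D k (row x D).
  exists (dl x), 0; split; rewrite ?mul0mx ?sub0mx ?addr0 -?rowE //.
    apply/chiSP => i; rewrite inE dlE -leqNgt => ki; case: (eqVneq i x) => [e|] //.
    by move: ki; rewrite e leqNgt xk.
  by apply/chiSP => i iB; rewrite mxE X_row0.
set w := row x D - dl t.
have Ww : PW D k w.
  apply: (closedP_coord (PW_closed k)) => i; rewrite /w !mxE eqxx.
  case: (eqVneq i t) => [->|it]; first by rewrite (one x t) // subrr eqxx.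
  rewrite subr0 => nzi; case: (rowX xX nzi) => [iR|iP].
    have [h _] := dlR iR; case/submxP: h => a e.
    exists 0, (a *m chiS E B); split; rewrite ?mul0mx ?sub0mx ?add0r ?submxMl //.
    by rewrite e mulmxA.
  by move: it; rewrite (un x i t) ?eqxx.
have -> : dl t = row x D + (-1) *: w by rewrite /w scaleN1r opprB addrC subrK.
by have [_ hA hS] := PW_closed k; apply: hA => //; apply: hS.
Qed.

Lemma X_piv x : x \in X <-> (pivP (PC D) x /\ ~ pivP (PRB D) x).
Proof.
rewrite piv_PC piv_PRB; split.
  by case/X_char => xB xY xZ; split=> // [[]]; apply/negP.
move=> [xY h]; apply: notB_Y_inv => //; apply/negP => hh; apply: h; by [left|right].
Qed.

Lemma P_piv p : p \in P <-> (pivP (PZ D) p /\ ~ pivP (PW D 0) p).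
Proof.
rewrite piv_PZ piv_PW; split.
  move=> pP; split; first by left.
  by case=> [pR|[_ [x [_ //]]]]; move: (P_notR pP); rewrite pR.
by move=> [[//|pR] h]; exfalso; apply: h; left.
Qed.

Lemma pair_piv x p : x \in X -> p \in P ->
  (D x p != 0 <-> (pivP (PW D x.+1) p /\ ~ pivP (PW D x) p)).
Proof.
move=> xX pP; rewrite !piv_PW; have [_ _ _ _ inj] := hq; split.
  move=> nz; split; first by right; split=> //; exists x.
  case=> [pR|[_ [x' [x'X lt nz']]]]; first by move: (P_notR pP); rewrite pR.
  by move: lt; rewrite (inj p x' x) // ltnn.
case=> [[pR|[_ [x' [x'X lt nz']]]] nn]; first by move: (P_notR pP); rewrite pR.
move: lt; rewrite ltnS leq_eqVlt => /orP [/eqP/val_inj <- //|lt].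
by exfalso; apply: nn; right; split=> //; exists x'.
Qed.

End Quasi.

Lemma part3 D D1 : isMAB deg B D -> isMAB deg B D1 ->
  quasi_elem B D -> quasi_elem B D1 -> ABequiv deg B D D1 ->
  forall x p, x \in Xset B D -> p \in Pset B D -> (D x p != 0 <-> D1 x p != 0).
Proof.
move=> hD hD1 q q1 [G [uG a b c eD1]] x p xX pP.
have gG : good G by split.
have iZ m : pivP (PZ D1) m <-> pivP (PZ D) m.
  by rewrite eD1; apply: (piv_inv m gG uG) => w; exact: (PZ_inv D gG uG w).
have iC m : pivP (PC D1) m <-> pivP (PC D) m.
  by rewrite eD1; apply: (piv_inv m gG uG) => w; exact: (PC_inv D gG uG w).
have iRB m : pivP (PRB D1) m <-> pivP (PRB D) m.
  by rewrite eD1; apply: (piv_inv m gG uG) => w; exact: (PRB_inv D gG uG w).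
have iW k m : pivP (PW D1 k) m <-> pivP (PW D k) m.
  by rewrite eD1; apply: (piv_inv m gG uG) => w; exact: (PW_inv D gG uG k w).
have xX1 : x \in Xset B D1.
  by apply/(X_piv hD1 q1); rewrite iC iRB; apply/(X_piv hD q).
have pP1 : p \in Pset B D1.
  by apply/(P_piv hD1 q1); rewrite iZ iW; apply/(P_piv hD q).
rewrite (pair_piv hD q xX pP) (pair_piv hD1 q1 xX1 pP1) !iW.
by [].
Qed.
End Work.

Unset Implicit Arguments.

Theorem lemma3p4 (E : fieldType) (N : nat) (deg : 'I_N -> int) (B : {set 'I_N}) :
  (* (1) *)
  (forall D : 'M[E]_N, isMAB deg B D ->
     exists D' : 'M[E]_N,
       [/\ isMAB deg B D', ABequiv deg B D D' & quasi_elem B D']) /\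
  (* (2) *)
  (forall D : 'M[E]_N, isMAB deg B D -> quasi_elem B D ->
     forall b : 'I_N,
       b \in Hset B D <->
       (b \in Pset B D /\ exists x, x \in Xset B D /\ D x b != 0)) /\
  (* (3) *)
  (forall D D1 : 'M[E]_N, isMAB deg B D -> isMAB deg B D1 ->
     quasi_elem B D -> quasi_elem B D1 -> ABequiv deg B D D1 ->
     forall x p : 'I_N, x \in Xset B D -> p \in Pset B D ->
       (D x p != 0 <-> D1 x p != 0)).
Proof.
split; first exact: (@part1 E N deg B).
split; first by move=> D hD hq b; exact: (@part2 E N deg B D hD hq b).
move=> D D1 hD hD1 q q1 eq x p xX pP.
exact: (@part3 E N deg B D D1 hD hD1 q q1 eq x p xX pP).
Qed.
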